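(* Let $p$ be a prime and let $L$ be a $\mathbb{Z}_p$-Lie lattice of dimension $d$ such that $d(\mathbb{Q}_p \otimes_{\mathbb{Z}_p} L) = d$. Then one of the following holds: (i) $L \cong \mathbb{Z}_p^d$ is abelian; (ii) $L = \mathbb{Z}_p x \oplus A$ for some $x\in L$, where $A \cong \mathbb{Z}_p^{d-1}$ is an abelian ideal of $L$ and $\mathrm{ad}(x)$ acts on $A$ as multiplication by $p^s$ for some $s \in \mathbb{N}_0$.
   Context: A $\mathbb{Z}_p$-Lie lattice of dimension $d$ is a free $\mathbb{Z}_p$-module of rank $d$ equipped with a $\mathbb{Z}_p$-bilinear Lie bracket. For a Lie algebra, $d(\cdot)$ denotes its minimal number of generators as a Lie algebra. $\mathbb{N}_0 = \{0,1,2,\dots\}$. *)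

(* Defs.v *)
From HB Require Import structures.
From mathcomp Require Import all_boot all_order all_algebra.
From mathcomp Require Import fraction.
Set Implicit Arguments. Unset Strict Implicit. Unset Printing Implicit Defensive.
Import Order.TTheory GRing.Theory Num.Theory.
Local Open Scope ring_scope.

(* R is (isomorphic to) the ring Z_p of p-adic integers: a p-adically complete
   discrete valuation ring of characteristic 0 with uniformizer p and residue
   field F_p. *)
Definition padic_integers (p : nat) (R : idomainType) : Prop :=
  [/\ p%:R != 0 :> R,
      ~~ (p%:R \is a @GRing.unit R),
      (forall x : R, x != 0 ->
         exists n : nat, exists u : R, u \is a GRing.unit /\ x = p%:R ^+ n * u),
      (forall x : R, exists k : nat, exists y : R, x = k%:R + p%:R * y)
    & (forall a : nat -> R,
         (forall n, exists y, a n.+1 - a n = p%:R ^+ n * y) ->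
         exists l : R, forall n, exists y, l - a n = p%:R ^+ n * y)].

Definition lie_br (R : comRingType) (d : nat) (c : 'I_d -> 'I_d -> 'rV[R]_d)
  (u v : 'rV[R]_d) : 'rV[R]_d :=
  \sum_(i < d) \sum_(j < d) (u 0 i * v 0 j) *: c i j.

Definition is_lie_bracket (R : comRingType) (d : nat)
  (c : 'I_d -> 'I_d -> 'rV[R]_d) : Prop :=
  (forall u, lie_br c u u = 0) /\
  (forall u v w, lie_br c u (lie_br c v w) + lie_br c v (lie_br c w u)
                 + lie_br c w (lie_br c u v) = 0).

(* Structure constants of Q_p (x) L, where Q_p = Frac(Z_p). *)
Definition frac_consts (R : idomainType) (d : nat)
  (c : 'I_d -> 'I_d -> 'rV[R]_d) : 'I_d -> 'I_d -> 'rV[{fraction R}]_d :=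
  fun i j => map_mx (@tofrac R) (c i j).

Definition lie_subalg (K : fieldType) (d : nat) (c : 'I_d -> 'I_d -> 'rV[K]_d)
  (V : 'rV[K]_d -> Prop) : Prop :=
  [/\ V 0, (forall u v, V u -> V v -> V (u + v)),
      (forall (a : K) u, V u -> V (a *: u))
    & (forall u v, V u -> V v -> V (lie_br c u v))].

Definition lie_generates (K : fieldType) (d : nat) (c : 'I_d -> 'I_d -> 'rV[K]_d)
  (n : nat) (g : 'I_n -> 'rV[K]_d) : Prop :=
  forall V, lie_subalg c V -> (forall i, V (g i)) -> forall v, V v.

Definition lie_min_gens (K : fieldType) (d : nat) (c : 'I_d -> 'I_d -> 'rV[K]_d)
  (n : nat) : Prop :=
  (exists g : 'I_n -> 'rV[K]_d, lie_generates c g) /\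
  (forall m (g : 'I_m -> 'rV[K]_d), lie_generates c g -> (n <= m)%N).

(* Main.v *)
Require Import Defs.
From HB Require Import structures.
From mathcomp Require Import all_boot all_order all_algebra.
From mathcomp Require Import fraction.
Import Order.TTheory GRing.Theory Num.Theory.
Local Open Scope ring_scope.
Set Implicit Arguments. Unset Strict Implicit. Unset Printing Implicit Defensive.

Section Br.
Variables (R : comRingType) (d : nat) (c : 'I_d -> 'I_d -> 'rV[R]_d).

Lemma e_coord (i t : 'I_d) : ('e_i : 'rV[R]_d) 0 t = (i == t)%:R.
Proof. by rewrite mxE eqxx eq_sym. Qed.
Lemma e_same (i : 'I_d) : ('e_i : 'rV[R]_d) 0 i = 1.
Proof. by rewrite e_coord eqxx. Qed.
Lemma e_diff (i t : 'I_d) : i != t -> ('e_i : 'rV[R]_d) 0 t = 0.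
Proof. by rewrite e_coord => /negbTE ->. Qed.

Lemma sum_e_coord (P : pred 'I_d) (a : 'I_d -> R) t :
  (\sum_(m | P m) a m *: ('e_m : 'rV[R]_d)) 0 t = if P t then a t else 0.
Proof.
rewrite summxE; case: ifP => Pt.
  rewrite (bigD1 t) //= big1 ?addr0; first by rewrite mxE e_same mulr1.
  by move=> m /andP[_ hm]; rewrite mxE e_diff // mulr0.
apply: big1 => m Pm; rewrite mxE; case: (eqVneq m t) => [e|ne].
  by rewrite e Pt in Pm.
by rewrite e_diff // mulr0.
Qed.

Lemma Dco (u v : 'rV[R]_d) t : (u + v) 0 t = u 0 t + v 0 t.
Proof. by rewrite mxE. Qed.
Lemma Bco (u v : 'rV[R]_d) t : (u - v) 0 t = u 0 t - v 0 t.
Proof. by rewrite !mxE. Qed.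
Lemma Zco a (u : 'rV[R]_d) t : (a *: u) 0 t = a * u 0 t.
Proof. by rewrite mxE. Qed.

Lemma br_delta i j : lie_br c 'e_i 'e_j = c i j.
Proof.
rewrite /lie_br (bigD1 i) //= (bigD1 j) //= !e_same mul1r scale1r.
rewrite [X in _ + X = _]big1 ?addr0; last first.
  by move=> a ha; apply: big1 => b _; rewrite (e_diff (i:=i)) 1?eq_sym // mul0r scale0r.
rewrite big1 ?addr0 //; move=> b hb.
by rewrite (e_diff (i:=j)) 1?eq_sym // mulr0 scale0r.
Qed.

Lemma br_addr u v w : lie_br c u (v + w) = lie_br c u v + lie_br c u w.
Proof.
rewrite /lie_br -big_split; apply: eq_bigr => i _; rewrite -big_split.
by apply: eq_bigr => j _; rewrite mxE mulrDr scalerDl.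
Qed.

Lemma br_addl u v w : lie_br c (u + v) w = lie_br c u w + lie_br c v w.
Proof.
rewrite /lie_br -big_split; apply: eq_bigr => i _; rewrite -big_split.
by apply: eq_bigr => j _; rewrite mxE mulrDl scalerDl.
Qed.

Lemma br0 (h : forall i j, c i j = 0) u v : lie_br c u v = 0.
Proof. by rewrite /lie_br big1 // => i _; rewrite big1 // => j _; rewrite h scaler0. Qed.

Variable f : 'I_d -> R.
Definition Ff (u : 'rV[R]_d) := \sum_i u 0 i * f i.

Lemma br_formula (h : forall i j, c i j = f i *: 'e_j - f j *: 'e_i) u v :
  lie_br c u v = Ff u *: v - Ff v *: u.
Proof.
rewrite /lie_br.
under eq_bigr => i _ do under eq_bigr => j _ do rewrite h scalerBr !scalerA.
under eq_bigr => i _ do rewrite sumrB.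
rewrite sumrB; congr (_ - _).
  rewrite /Ff [in RHS](row_sum_delta v) scaler_suml; apply: eq_bigr => i _.
  rewrite scaler_sumr; apply: eq_bigr => j _.
  by rewrite scalerA; congr (_ *: _); rewrite mulrAC.
rewrite exchange_big /Ff [in RHS](row_sum_delta u) scaler_suml; apply: eq_bigr => j _.
rewrite scaler_sumr; apply: eq_bigr => i _.
by rewrite scalerA; congr (_ *: _); rewrite [RHS]mulrC mulrA.
Qed.

Lemma FfD u v : Ff (u + v) = Ff u + Ff v.
Proof. by rewrite /Ff -big_split; apply: eq_bigr => i _; rewrite mxE mulrDl. Qed.
Lemma FfZ a u : Ff (a *: u) = a * Ff u.
Proof. by rewrite /Ff mulr_sumr; apply: eq_bigr => i _; rewrite mxE mulrA. Qed.
Lemma FfN u : Ff (- u) = - Ff u.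
Proof. by rewrite -scaleN1r FfZ mulN1r. Qed.
Lemma Ff_sum I r (P : pred I) (F : I -> 'rV[R]_d) :
  Ff (\sum_(x <- r | P x) F x) = \sum_(x <- r | P x) Ff (F x).
Proof.
elim/big_rec2: _ => [|x y1 y2 _ <-]; last by rewrite FfD.
by rewrite /Ff big1 // => i _; rewrite mxE mul0r.
Qed.
Lemma Ff_e i : Ff 'e_i = f i.
Proof.
rewrite /Ff (bigD1 i) //= e_same mul1r big1 ?addr0 // => j hj.
by rewrite e_diff 1?eq_sym // mul0r.
Qed.
End Br.
Section Sub.
Variables (K : fieldType) (d : nat) (c : 'I_d -> 'I_d -> 'rV[K]_d).
Variables (V : 'rV[K]_d -> Prop) (HV : lie_subalg c V).

Lemma V_add u v : V u -> V v -> V (u + v). Proof. by case: HV => _ h _ _; apply: h. Qed.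
Lemma V_scale a u : V u -> V (a *: u). Proof. by case: HV => _ _ h _; apply: h. Qed.
Lemma V_sub u v : V u -> V v -> V (u - v).
Proof. by move=> hu hv; rewrite -scaleN1r; apply: V_add => //; apply: V_scale. Qed.
Lemma V_br u v : V u -> V v -> V (lie_br c u v). Proof. by case: HV => _ _ _ h; apply: h. Qed.
Lemma V_sum (P : pred 'I_d) F : (forall i, P i -> V (F i)) -> V (\sum_(i | P i) F i).
Proof.
move=> h; elim/big_ind: _ => //; first by case: HV.
by move=> x y; apply: V_add.
Qed.
Lemma V_all : (forall m, V 'e_m) -> forall v, V v.
Proof. by move=> h v; rewrite (row_sum_delta v); apply: V_sum => i _; apply: V_scale. Qed.
Lemma V_strip (P : pred 'I_d) w : (forall m, P m -> V 'e_m) -> V w ->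
  V (w - \sum_(m | P m) w 0 m *: 'e_m).
Proof. by move=> h hw; apply: V_sub => //; apply: V_sum => i Pi; apply: V_scale; apply: h. Qed.

Lemma gen1 k w : (forall m, m != k -> V 'e_m) -> V w -> w 0 k != 0 -> forall v, V v.
Proof.
move=> h hw nz; have := V_strip (P := fun m => m != k) h hw.
set w' := (w - _) => hw'.
have ew : w' = w 0 k *: 'e_k.
  apply/rowP => t; rewrite !mxE sum_e_coord eqxx /=.
  by case: (eqVneq t k) => [->|ne]; rewrite /= ?subr0 ?mulr1 ?subrr ?mulr0.
have ek : V 'e_k.
  have := V_scale (w 0 k)^-1 hw'; rewrite ew scalerA mulVf // scale1r //.
apply: V_all => m; case: (eqVneq m k) => [->//|]; exact: h.
Qed.

Lemma gen2 j k y z : j != k -> (forall m, m != j -> m != k -> V 'e_m) -> V y -> V z ->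
  y 0 j * z 0 k - y 0 k * z 0 j != 0 -> forall v, V v.
Proof.
move=> njk h hy hz nz.
have hP : forall m, (m != j) && (m != k) -> V 'e_m by move=> m /andP[]; exact: h.
have hy' := V_strip hP hy; have hz' := V_strip hP hz.
have := V_sub (V_scale (z 0 k) hy') (V_scale (y 0 k) hz').
set q := (_ - _) => hq.
have eq : q = (y 0 j * z 0 k - y 0 k * z 0 j) *: 'e_j.
  apply/rowP => t; rewrite !mxE !sum_e_coord.
  case: (eqVneq t j) => [->|ntj]; rewrite /=.
    by rewrite !subr0 mulr1 mulrC.
  case: (eqVneq t k) => [->|ntk] /=.
    by rewrite !subr0 mulr0 mulrC subrr.
  by rewrite !subrr !mulr0 subrr.
  
have ej : V 'e_j.
  have := V_scale (y 0 j * z 0 k - y 0 k * z 0 j)^-1 hq.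
  by rewrite eq scalerA mulVf // scale1r.
have h' : forall m, m != k -> V 'e_m.
  by move=> m nmk; case: (eqVneq m j) => [->//|nmj]; exact: h.
case: (eqVneq (y 0 k) 0) => [yk0|yk]; last exact: gen1 h' hy yk.
case: (eqVneq (z 0 k) 0) => [zk0|zk]; last exact: gen1 h' hz zk.
by move: nz; rewrite yk0 zk0 !mulr0 mul0r subrr eqxx.
Qed.
End Sub.
Section Main.
Variables (Zp : idomainType) (n : nat) (c : 'I_n.+1 -> 'I_n.+1 -> 'rV[Zp]_n.+1).
Local Notation K := {fraction Zp}.
Local Notation cK := (frac_consts c).
Hypothesis hmin : lie_min_gens cK n.+1.

Lemma cK_coord i j t : cK i j 0 t = tofrac (c i j 0 t).
Proof. by rewrite /frac_consts mxE. Qed.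

Lemma no_gen (k : 'I_n.+1) (h : 'I_n.+1 -> 'rV[K]_n.+1) :
  (forall V, lie_subalg cK V -> (forall m, m != k -> V (h m)) -> forall v, V v) -> False.
Proof.
move=> H; case: hmin => _ hm.
suff : (n.+1 <= n)%N by rewrite ltnn.
apply: (hm n (fun t => h (lift k t))) => V HV hg. apply: (H V HV) => m nm.
rewrite eq_sym in nm; case: (unlift_some nm) => t -> _; exact: hg.
Qed.

Lemma stepA i j k : i != j -> k != i -> k != j -> c i j 0 k = 0.
Proof.
move=> nij nki nkj; apply/eqP; apply: contraT => nz.
case: (no_gen (k:=k) (h:=fun m => 'e_m)) => V HV hV.
apply: (gen1 HV (k:=k) (w := cK i j)) => //.
  by rewrite -br_delta; apply: V_br => //; apply: hV; rewrite eq_sym.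
by rewrite cK_coord tofrac_eq0.
Qed.

Lemma stepB i j k : i != j -> i != k -> j != k -> c i j 0 j = c i k 0 k.
Proof.
move=> nij nik njk; apply/eqP; apply: contraT => nz.
case: (no_gen (k:=k) (h:=fun m => if m == j then 'e_j + 'e_k else 'e_m)) => V HV hV.
have hy : V ('e_j + 'e_k) by have := hV j njk; rewrite eqxx.
have hi : V 'e_i by have := hV i (nik); rewrite (negbTE nij).
apply: (gen2 HV (j:=j) (k:=k) (y := 'e_j + 'e_k) (z := lie_br cK 'e_i ('e_j + 'e_k))) => //.
- by move=> m nmj nmk; have := hV m nmk; rewrite (negbTE nmj).
- exact: V_br.
rewrite br_addr !br_delta !Dco !cK_coord !(e_same K) (e_diff K njk).
rewrite (e_diff K (t:=j) (i:=k)); last by rewrite eq_sym.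
rewrite addr0 add0r !mul1r.
have h1 : c i j 0 k = 0 by apply: stepA => //; rewrite eq_sym.
have h2 : c i k 0 j = 0 by apply: stepA => //; rewrite eq_sym.
rewrite h1 h2 tofrac0 add0r addr0 -tofracB tofrac_eq0 subr_eq0.
by rewrite eq_sym.
Qed.
End Main.

Section Alt.
Variables (R : comRingType) (d : nat) (c : 'I_d -> 'I_d -> 'rV[R]_d).
Hypothesis alt : forall u, lie_br c u u = 0.
Lemma c_ii i : c i i = 0. Proof. by rewrite -br_delta alt. Qed.
Lemma c_anti i j : c j i = - c i j.
Proof.
have := alt ('e_i + 'e_j); rewrite !br_addl !br_addr !br_delta !c_ii add0r addr0.
by move/eqP; rewrite addrC addr_eq0 => /eqP.
Qed.
End Alt.
Section Dvd.
Variables (p : nat) (Zp : idomainType).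
Hypothesis hp : padic_integers p Zp.

Lemma dvd_le (a b u w : Zp) (m n : nat) : u \is a GRing.unit ->
  a = p%:R ^+ n * u -> b = p%:R ^+ m * w -> (n <= m)%N -> exists q, b = q * a.
Proof.
move=> hu -> -> h.
have [e ->] : exists e, m = (e + n)%N by exists (m - n)%N; rewrite subnK.
exists (p%:R ^+ e * w * u^-1).
rewrite exprD [_ ^+ n * u]mulrC mulrA -(mulrA _ u^-1) mulVr // mulr1.
by rewrite mulrAC.
Qed.

Lemma total_dvd (a b : Zp) : (exists q, b = q * a) \/ (exists q, a = q * b).
Proof.
case: hp => _ _ hv _ _.
case: (eqVneq a 0) => [->|na]; first by right; exists 0; rewrite mul0r.
case: (eqVneq b 0) => [->|nb]; first by left; exists 0; rewrite mul0r.
have [n [u [hu ea]]] := hv a na; have [m [w [hw eb]]] := hv b nb.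
case: (leqP n m) => h; first by left; exact: dvd_le hu ea eb h.
by right; apply: dvd_le hw eb ea (ltnW h).
Qed.

Lemma exists_min N (f : 'I_N.+1 -> Zp) : exists k, forall i, exists q, f i = q * f k.
Proof.
suff H : forall m, exists k, forall i : 'I_N.+1, (i < m)%N -> exists q, f i = q * f k.
  by have [k hk] := H N.+1; exists k => i; apply: hk.
elim=> [|m [k hk]]; first by exists ord0.
case: (ltnP m N.+1) => hm; last first.
  by exists k => i hi; apply: hk; apply: leq_trans (ltn_ord i) hm.
pose im := Ordinal hm.
case: (total_dvd (f k) (f im)) => [[q hq]|[q hq]].
  exists k => i; rewrite ltnS leq_eqVlt => /orP[/eqP e|hi]; last exact: hk.
  by exists q; have -> : i = im by apply: val_inj.
exists im => i; rewrite ltnS leq_eqVlt => /orP[/eqP e|hi].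
  by exists 1; rewrite mul1r; have -> : i = im by apply: val_inj.
by have [q' ->] := hk i hi; exists (q' * q); rewrite hq mulrA.
Qed.
End Dvd.

Unset Implicit Arguments. Set Strict Implicit.
Theorem corollary2p3 (p : nat) (Zp : idomainType) (d : nat)
  (c : 'I_d -> 'I_d -> 'rV[Zp]_d) :
  prime p -> padic_integers p Zp -> is_lie_bracket c ->
  lie_min_gens (frac_consts c) d ->
  (forall u v, lie_br c u v = 0) \/
  exists x : 'rV[Zp]_d, exists B : 'M[Zp]_(d.-1, d), exists s : nat,
    [/\ (forall u : 'rV[Zp]_(d.-1), u *m B = 0 -> u = 0),
        (forall v : 'rV[Zp]_d, exists! ru : Zp * 'rV[Zp]_(d.-1),
            v = ru.1 *: x + ru.2 *m B),
        (forall (v : 'rV[Zp]_d) (u : 'rV[Zp]_(d.-1)),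
            exists w : 'rV[Zp]_(d.-1), lie_br c v (u *m B) = w *m B),
        (forall u w : 'rV[Zp]_(d.-1), lie_br c (u *m B) (w *m B) = 0)
      & (forall u : 'rV[Zp]_(d.-1),
            lie_br c x (u *m B) = (p ^ s)%:R *: (u *m B))].
Proof.
move=> _ hp [alt _] hmin.
case: d c hmin alt => [|n] c hmin alt.
  by left => u v; rewrite /lie_br big_ord0.
case: n c hmin alt => [|n] c hmin alt.
  left; apply: br0 => i j; rewrite (ord1 i) (ord1 j); exact: c_ii.
pose o (i : 'I_n.+2) : 'I_n.+2 := if i == ord0 then lift ord0 ord0 else ord0.
have o_neq : forall i, o i != i.
  move=> i; rewrite /o; case: (eqVneq i ord0) => [->|ni]; first by rewrite eq_sym neq_lift.
  by rewrite eq_sym.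
pose f i := c i (o i) 0 (o i).
have hf : forall i j, i != j -> c i j 0 j = f i.
  move=> i j nij; rewrite /f; case: (eqVneq j (o i)) => [->//|njo].
  apply: (stepB hmin) => //; by rewrite eq_sym o_neq.
have hc : forall i j, c i j = f i *: 'e_j - f j *: 'e_i.
  move=> i j; apply/rowP => t; rewrite Bco !Zco.
  case: (eqVneq i j) => [<-|nij]; first by rewrite c_ii // mxE subrr.
  have nji : j != i by rewrite eq_sym.
  case: (eqVneq t j) => [->|ntj].
    by rewrite hf // e_same e_diff // mulr0 mulr1 subr0.
  case: (eqVneq t i) => [->|nti].
    rewrite (c_anti alt j i) mxE hf // e_same e_diff // mulr0 mulr1.
    by rewrite sub0r.
  have njt : j != t by rewrite eq_sym.
  have nit : i != t by rewrite eq_sym.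
  rewrite (stepA hmin nij) // e_diff // e_diff //.
  by rewrite !mulr0 subrr.
have hbr : forall u v, lie_br c u v = Ff f u *: v - Ff f v *: u.
  by move=> u v; apply: br_formula.
have [k hk] := exists_min hp f.
case: (eqVneq (f k) 0) => [fk0|fk].
  left => u v; apply: br0 => i j; rewrite hc.
  have z : forall i, f i = 0 by move=> i'; have [q ->] := hk i'; rewrite fk0 mulr0.
  by rewrite !z !scale0r subrr.
have hv := hp; case: hv => _ _ hv _ _.
have [s [w [hw efk]]] := hv (f k) fk.
have [q hq] := fin_all_exists hk.
right.
pose x := w^-1 *: ('e_k : 'rV[Zp]_n.+2).
pose B : 'M[Zp]_(n.+1, n.+2) := \matrix_(t < n.+1) ('e_(lift k t) - q (lift k t) *: 'e_k).
exists x, B, s.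
have Bc : forall t j, B t j = (('e_(lift k t) - q (lift k t) *: 'e_k : 'rV[Zp]_n.+2) 0 j).
  by move=> t j; rewrite /B mxE.
have uBl : forall (u : 'rV_n.+1) t0, (u *m B) 0 (lift k t0) = u 0 t0.
  move=> u t0; rewrite mxE (bigD1 t0) //= Bc Bco Zco e_same e_diff ?neq_lift //.
  rewrite mulr0 subr0 mulr1 big1 ?addr0 // => t nt.
  have nl : lift k t != lift k t0.
    by apply/eqP => /lift_inj e; rewrite e eqxx in nt.
  by rewrite Bc Bco Zco !e_diff ?neq_lift // mulr0 subr0 mulr0.
have uBk : forall (u : 'rV_n.+1), (u *m B) 0 k = - \sum_t u 0 t * q (lift k t).
  move=> u; rewrite mxE -sumrN; apply: eq_bigr => t _.
  rewrite Bc Bco Zco e_same e_diff; last by rewrite eq_sym neq_lift.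
  by rewrite mulr1 sub0r mulrN.
have xl : forall t, x 0 (lift k t) = 0 by move=> t; rewrite Zco e_diff ?neq_lift // mulr0.
have xk : x 0 k = w^-1 by rewrite Zco e_same mulr1.
have FB : forall u, Ff f (u *m B) = 0.
  move=> u; rewrite mulmx_sum_row Ff_sum big1 // => t _.
  by rewrite FfZ rowK FfD FfN FfZ !Ff_e hq subrr mulr0.
have Fx : Ff f x = p%:R ^+ s.
  by rewrite FfZ Ff_e efk mulrCA mulVr // mulr1.
split.
- move=> u hu; apply/rowP => t; rewrite -uBl hu !mxE //.
- move=> v; pose u := \row_t v 0 (lift k t).
  pose S := \sum_t u 0 t * q (lift k t).
  exists (w * (v 0 k + S), u); split.
    apply/rowP => j; rewrite Dco Zco /=; case: (unliftP k j) => [t ->|->].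
      by rewrite uBl xl mulr0 add0r mxE.
    by rewrite uBk xk -/S mulrAC mulrV // mul1r addrK.
  move=> [r' u'] /= H.
  have ecoord : forall j, v 0 j = r' * x 0 j + (u' *m B) 0 j.
    by move=> j; rewrite H Dco Zco.
  have eu : u' = u.
    by apply/rowP => t; rewrite mxE ecoord xl mulr0 add0r uBl.
  subst u'.
  have := ecoord k; rewrite xk uBk -/S => ev.
  by rewrite ev subrK mulrCA mulrV // mulr1.
- by move=> v u; exists (Ff f v *: u); rewrite hbr FB scale0r subr0 scalemxAl.
- by move=> u u'; rewrite hbr !FB !scale0r subrr.
- by move=> u; rewrite hbr FB scale0r subr0 Fx natrX.
Qed.
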